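(* Let $\oplus$ be a basic combinator whose domain is the set of all pairs of tpos over $W$. Then $\oplus$ satisfies both ($\oplus$SPU+) for all $x,y,z \in W$: if $x \prec_1 y$ and $z \prec_2 y$ then $x \prec_{1\oplus 2} y$ or $z \prec_{1\oplus 2} y$, and ($\oplus$PAR) for all $x,y \in W$: if $x \prec_{1\oplus 2} y$ then for each $i \in \{1,2\}$ there exists $z \in W$ with $x \sim_{1\oplus 2} z$ and $z \prec_i y$, (for all pairs $\langle\preceq_1,\preceq_2\rangle$) if and only if $\oplus = \oplus_{\mathrm{STQ}}$.
   Context: $W$ is a finite nonempty set (of possible worlds). A tpo is a total preorder on $W$; $\prec$, $\sim$ its strict and symmetric parts. For $S \subseteq W$, $\min(\preceq, S) = \{x \in S : x \preceq y\ \forall y \in S\}$. A combinator $\oplus$ maps pairs of tpos $\langle\preceq_1,\preceq_2\rangle$ to a tpo $\preceq_{1\oplus 2}$; it is basic if $\min(\preceq_{1\oplus 2}, W) = \min(\preceq_1, W) \cup \min(\preceq_2, W)$ for all pairs. The Synchronous TeamQueue combinator $\oplus_{\mathrm{STQ}}$ maps $\langle\preceq_1,\preceq_2\rangle$ to the tpo whose ordered partition into ranks (most plausible first) is $\langle T_1,\ldots,T_m\rangle$, where $T_i = \min(\preceq_1, R_i) \cup \min(\preceq_2, R_i)$ with $R_i = \bigcap_{k<i} T_k^c$ ($T^c$ the complement in $W$), and $m$ is minimal with $\bigcup_{i\le m} T_i = W$. *)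

(* Defs.v *)
From mathcomp Require Import all_boot.
Set Implicit Arguments. Unset Strict Implicit. Unset Printing Implicit Defensive.

Section Tpo.
Variable W : finType.

Definition total_preorder (le : rel W) : Prop :=
  (forall x y, le x y || le y x) /\ (forall x y z, le x y -> le y z -> le x z).

Definition strict (le : rel W) : rel W := fun x y => le x y && ~~ le y x.
Definition symm (le : rel W) : rel W := fun x y => le x y && le y x.

Definition minset (le : rel W) (S : {set W}) : {set W} :=
  [set x in S | [forall y in S, le x y]].

Definition combinator := rel W -> rel W -> rel W.

Definition is_combinator (c : combinator) : Prop :=
  forall le1 le2, total_preorder le1 -> total_preorder le2 ->
    total_preorder (c le1 le2).

Definition basic (c : combinator) : Prop :=
  forall le1 le2, total_preorder le1 -> total_preorder le2 ->
    minset (c le1 le2) setT = minset le1 setT :|: minset le2 setT.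

(* Synchronous TeamQueue.  stq_R le1 le2 n is R_{n+1} (the worlds not yet
   placed in T_1..T_n), and stq_T le1 le2 n is T_{n+1}. *)
Fixpoint stq_R (le1 le2 : rel W) (n : nat) : {set W} :=
  match n with
  | 0 => setT
  | n'.+1 => stq_R le1 le2 n' :\: (minset le1 (stq_R le1 le2 n')
                                   :|: minset le2 (stq_R le1 le2 n'))
  end.

Definition stq_T (le1 le2 : rel W) (n : nat) : {set W} :=
  minset le1 (stq_R le1 le2 n) :|: minset le2 (stq_R le1 le2 n).

(* x ⪯_STQ y iff rank(x) <= rank(y), i.e. iff every R_n containing x also
   contains y.  (For tpos, R_n = ∅ for n >= #|W|, so indices up to #|W|
   suffice.) *)
Definition stq : combinator := fun le1 le2 x y =>
  [forall n : 'I_#|W|.+1, (x \in stq_R le1 le2 n) ==> (y \in stq_R le1 le2 n)].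

Definition SPUplus (c : combinator) (le1 le2 : rel W) : Prop :=
  forall x y z, strict le1 x y -> strict le2 z y ->
    strict (c le1 le2) x y \/ strict (c le1 le2) z y.

Definition PAR (c : combinator) (le1 le2 : rel W) : Prop :=
  forall x y, strict (c le1 le2) x y ->
    (exists z, symm (c le1 le2) x z /\ strict le1 z y) /\
    (exists z, symm (c le1 le2) x z /\ strict le2 z y).

End Tpo.

(* Main.v *)
Require Import Defs.
From mathcomp Require Import all_boot.
Set Implicit Arguments. Unset Strict Implicit. Unset Printing Implicit Defensive.

Local Notation minset := Defs.minset.
Section Aux.
Variable W : finType.

Lemma tpo_refl (le : rel W) : total_preorder le -> forall x, le x x.
Proof. by case=> tot _ x; have := tot x x; rewrite orbb. Qed.

Lemma min_exists (le : rel W) (S : {set W}) x :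
  total_preorder le -> x \in S -> exists m, m \in minset le S.
Proof.
move=> [tot tr] xS.
suff H : forall n x, x \in S -> #|[set y in S | le y x]| <= n ->
    exists m, m \in minset le S by exact: (H _ x xS (leqnn _)).
elim=> [|n IH] {}x {}xS.
  rewrite leqn0 => /eqP/cards0_eq/setP/(_ x).
  by rewrite !inE xS (tpo_refl (conj tot tr)).
move=> Hn.
case Hm: [forall y in S, le x y].
  by exists x; rewrite inE xS Hm.
move/negbT: Hm; rewrite negb_forall => /existsP [y]; rewrite negb_imply => /andP [yS nxy].
apply: (IH y yS); rewrite -ltnS; apply: leq_trans Hn.
apply: proper_card; apply/properP; split.
  apply/subsetP => z; rewrite !inE => /andP [-> zy] /=.
  apply: tr zy _; by move: (tot x y); rewrite (negbTE nxy).
by exists x; rewrite !inE xS ?nxy // (tpo_refl (conj tot tr)).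
Qed.

Lemma min_strict (le : rel W) (S : {set W}) m y :
  total_preorder le -> m \in minset le S -> y \in S -> y \notin minset le S ->
  strict le m y.
Proof.
move=> [tot tr]; rewrite !inE => /andP [mS /forall_inP mH] yS.
rewrite yS /= /strict mH //= => /forall_inPn [z zS nyz].
apply/negP => ym; apply: (negP nyz); apply: tr ym _; exact: mH.
Qed.

Variables le1 le2 : rel W.
Hypothesis t1 : total_preorder le1.
Hypothesis t2 : total_preorder le2.

Notation R := (stq_R le1 le2).
Notation T := (stq_T le1 le2).

Lemma T_sub n : T n \subset R n.
Proof.
apply/subsetP => x; rewrite !inE => /orP [] /andP [] //.
Qed.

Lemma memT x n : (x \in T n) = (x \in R n) && (x \notin R n.+1).
Proof.
rewrite [x \in R n.+1]/= in_setD -[_ :|: _]/(T n).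
case xT: (x \in T n); case xR: (x \in R n) => //=.
by rewrite (subsetP (T_sub n) _ xT) in xR.
Qed.

Lemma R_sub n m : n <= m -> R m \subset R n.
Proof.
move=> /subnK <-; elim: (m - n) => [|k IH]; first exact: subxx.
apply: subset_trans IH; rewrite addSn /=; exact: subsetDl.
Qed.

Lemma R_card n : R n = set0 \/ #|R n| + n <= #|W|.
Proof.
elim: n => [|n [IH|IH]].
  by right; rewrite addn0 /=; apply: max_card.
  by left; rewrite /= IH set0D.
case: (set_0Vmem (R n.+1)) => [->|[x xR]]; [by left|right].
have xRn : x \in R n by apply: (subsetP (R_sub (leqnSn n))).
have [m mM] := min_exists t1 xRn.
rewrite addnS; apply: leq_trans IH; rewrite ltn_add2r.
apply: proper_card; apply/properP; split; first exact: R_sub.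
exists m; first by move: mM; rewrite inE => /andP [].
have : m \in T n by rewrite inE mM.
by rewrite memT => /andP [].
Qed.

Lemma R_empty : R #|W| = set0.
Proof.
have [//|H] := R_card #|W|.
apply: cards0_eq; apply/eqP; rewrite -leqn0 -(leq_add2r #|W|) add0n; exact: H.
Qed.

Lemma R_lt x n : x \in R n -> n < #|W|.
Proof.
move=> xR; rewrite ltnNge; apply/negP => le.
by have := subsetP (R_sub le) _ xR; rewrite R_empty inE.
Qed.

Lemma rank x : exists k, x \in T k.
Proof.
have ex : exists n, x \notin R n by exists #|W|; rewrite R_empty inE.
case: (ex_minnP ex) => n xn nmin.
case: n xn nmin => [|k] xn nmin; first by rewrite inE in xn.
exists k; rewrite memT xn andbT.
by apply/negPn/negP => /nmin; rewrite ltnn.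
Qed.

Lemma memR x k n : x \in T k -> (x \in R n) = (n <= k).
Proof.
rewrite memT => /andP [xk xk1].
case: (leqP n k) => nk.
  exact: (subsetP (R_sub nk)).
by apply/negP => /(subsetP (R_sub nk)); apply/negP.
Qed.

Lemma T_lt x k : x \in T k -> k < #|W|.
Proof. by move=> xT; apply: (@R_lt x); rewrite (memR k xT). Qed.

Lemma stq_rank x y i j : x \in T i -> y \in T j -> stq le1 le2 x y = (i <= j).
Proof.
move=> xT yT; rewrite /stq.
case: (leqP i j) => ij.
  apply/forallP => n; apply/implyP; rewrite (memR _ xT) (memR _ yT) => ni.
  exact: leq_trans ij.
apply/negP => /forallP /(_ (Ordinal (leqW (T_lt xT)))) /implyP.
by rewrite /= (memR _ xT) (memR _ yT) leqnn => /(_ isT); rewrite leqNgt ij.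
Qed.

Lemma stq_strict x y i j : x \in T i -> y \in T j -> strict (stq le1 le2) x y = (i < j).
Proof. by move=> xT yT; rewrite /strict (stq_rank xT yT) (stq_rank yT xT) -ltnNge leq_eqVlt andb_orl ?andbb; case: ltngtP. Qed.

Lemma stq_symm x y i j : x \in T i -> y \in T j -> symm (stq le1 le2) x y = (i == j).
Proof. by move=> xT yT; rewrite /symm (stq_rank xT yT) (stq_rank yT xT) eqn_leq. Qed.

Lemma T_uniq x i j : x \in T i -> x \in T j -> i = j.
Proof.
move=> xi xj; apply/eqP; rewrite eqn_leq -(memR _ xi) -(memR _ xj).
by rewrite (memR _ xi) (memR _ xj) !leqnn.
Qed.

End Aux.

Theorem theorem2 (W : finType) (HW : 0 < #|W|) (c : combinator W) :
  is_combinator c -> basic c ->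
  ((forall le1 le2 : rel W, total_preorder le1 -> total_preorder le2 ->
      SPUplus c le1 le2 /\ PAR c le1 le2)
   <->
   (forall le1 le2 : rel W, total_preorder le1 -> total_preorder le2 ->
      c le1 le2 =2 stq le1 le2)).
Proof.
move=> isc _; split=> H le1 le2 t1 t2.
- have [SPU PR] := H le1 le2 t1 t2.
  have [totC trC] := isc le1 le2 t1 t2.
  set C := c le1 le2 in SPU PR totC trC *.
  have key : forall k,
    (forall x z, x \in stq_T le1 le2 k -> z \in stq_T le1 le2 k -> C x z) /\
    (forall x y, x \in stq_T le1 le2 k -> y \in stq_R le1 le2 k.+1 -> strict C x y).
    elim/ltn_ind => k IH.
    have B : forall x z, x \in stq_T le1 le2 k -> z \in stq_T le1 le2 k -> C x z.
      move=> x z xT zT; case/orP: (totC x z) => // Czx.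
      apply/negPn/negP => nCxz.
      have szx : strict C z x by rewrite /strict Czx nCxz.
      have [[w [zw wx]] [w' [zw' wx']]] := PR z x szx.
      have gen : forall (le : rel W) w0, x \in minset le (stq_R le1 le2 k) ->
          symm C z w0 -> strict le w0 x -> False.
        move=> le w0 xm zw0 w0x; have [j wT] := rank le2 t1 w0.
        case: (ltnP j k) => jk.
          have zR : z \in stq_R le1 le2 j.+1 by rewrite (memR _ zT).
          move: ((IH j jk).2 w0 z wT zR) zw0; rewrite /strict /symm.
          by case/andP => _ /negbTE ->.
        have wR : w0 \in stq_R le1 le2 k by rewrite (memR _ wT).
        move: xm; rewrite inE => /andP [_ /forall_inP /(_ w0 wR) xw].
        by move: w0x; rewrite /strict xw andbF.
      move: xT; rewrite /stq_T inE => /orP [] xm; [exact: gen xm zw wx | exact: gen xm zw' wx'].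
    split => // x y xT yR.
    have yRk : y \in stq_R le1 le2 k by apply: (subsetP (R_sub _ _ (leqnSn k))).
    have nyT : y \notin stq_T le1 le2 k by rewrite memT yR andbF.
    move: nyT; rewrite /stq_T inE negb_or => /andP [ny1 ny2].
    have [m1 m1M] := min_exists t1 yRk; have [m2 m2M] := min_exists t2 yRk.
    have s1 := min_strict t1 m1M yRk ny1; have s2 := min_strict t2 m2M yRk ny2.
    have gen : forall m, m \in stq_T le1 le2 k -> strict C m y -> strict C x y.
      move=> m mT /andP [my nym]; have xm := B x m xT mT.
      rewrite /strict (trC _ _ _ xm my) /=; apply/negP => yx.
      by apply: (negP nym); exact: trC yx xm.
    case: (SPU m1 y m2 s1 s2) => h.
      by apply: (gen m1) h; rewrite /stq_T inE m1M.
    by apply: (gen m2) h; rewrite /stq_T inE m2M orbT.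
  move=> x y; have [i xT] := rank le2 t1 x; have [j yT] := rank le2 t1 y.
  rewrite (stq_rank t1 xT yT); case: (ltngtP i j) => ij.
  + have yR : y \in stq_R le1 le2 i.+1 by rewrite (memR _ yT).
    by case/andP: ((key i).2 x y xT yR).
  + have xR : x \in stq_R le1 le2 j.+1 by rewrite (memR _ xT).
    by case/andP: ((key j).2 y x yT xR) => _ /negbTE.
  + by subst j; exact: (key i).1.
- have Hc := H le1 le2 t1 t2.
  have Hs : forall a b, strict (c le1 le2) a b = strict (stq le1 le2) a b.
    by move=> a b; rewrite /strict !Hc.
  have Hy : forall a b, symm (c le1 le2) a b = symm (stq le1 le2) a b.
    by move=> a b; rewrite /symm !Hc.
  split.
  + move=> x y z; rewrite !Hs.
    have [i xT] := rank le2 t1 x; have [j yT] := rank le2 t1 y.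
    have [k zT] := rank le2 t1 z.
    rewrite (stq_strict t1 xT yT) (stq_strict t1 zT yT) => sxy szy.
    case: (ltnP i j) => ij; first by left.
    case: (ltnP k j) => kj; first by right.
    have xR : x \in stq_R le1 le2 j by rewrite (memR _ xT).
    have zR : z \in stq_R le1 le2 j by rewrite (memR _ zT).
    move: yT; rewrite /stq_T inE => /orP []; rewrite inE => /andP [_ /forall_inP ym].
      by move: sxy; rewrite /strict ym // andbF.
    by move: szy; rewrite /strict ym // andbF.
  + move=> x y; rewrite Hs.
    have [i xT] := rank le2 t1 x; have [j yT] := rank le2 t1 y.
    rewrite (stq_strict t1 xT yT) => ij.
    have xR : x \in stq_R le1 le2 i by rewrite (memR _ xT).
    have yR : y \in stq_R le1 le2 i by rewrite (memR _ yT) ltnW.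
    have gen : forall m, m \in stq_T le1 le2 i -> symm (c le1 le2) x m.
      by move=> m mT; rewrite Hy (stq_symm t1 xT mT).
    have nyT : forall (le : rel W), y \notin minset le (stq_R le1 le2 i) ->
       y \notin minset le (stq_R le1 le2 i) by [].
    have yTn : y \notin stq_T le1 le2 i.
      by apply/negP => /T_uniq /(_ yT) ije; move: ij; rewrite ije ltnn.
    move: yTn; rewrite /stq_T inE negb_or => /andP [ny1 ny2].
    have [m1 m1M] := min_exists t1 xR; have [m2 m2M] := min_exists t2 xR.
    split.
      exists m1; split; first by apply: gen; rewrite /stq_T inE m1M.
      exact: min_strict t1 m1M yR ny1.
    exists m2; split; first by apply: gen; rewrite /stq_T inE m2M orbT.
    exact: min_strict t2 m2M yR ny2.
Qed.
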